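(* Let $\mathcal G$ be a strongly connected directed graph with no self loops, vertex set $\mathcal V=\{1,\dots,n\}$ and edge set $\mathcal E=\{1,\dots,m\}$. Let $B=S-D\in\mathbb{R}^{n\times m}$ be its incidence matrix, let $Q=DB^\mathsf{T}$, and let $W=\mathbf{1}z^\mathsf{T}$ and $Q^\ddagger$ be as defined in the context. Let $\omega^{\mathrm u}\in\mathbb{R}^n$ be a constant vector. Consider the dynamics \[ \dot{\tilde\theta}(t)=\omega^{\mathrm u}+c(t),\qquad \tilde\beta(t)=B^\mathsf{T}\tilde\theta(t),\qquad y(t)=D\tilde\beta(t). \] Let $\mathcal T\subset\mathcal E$ be an outward directed spanning tree with root $r$. Let $g_1,\dots,g_{n-1}$ be an ordering of the edges of $\mathcal T$ consistent with the tree order, i.e. $g_a\prec g_b$ implies $a<b$. Let $k>0$ and $k_2>0$. Let $0<t_1<t_2<\dots<t_n$ satisfy $t_{j+1}-t_j>|\tilde\beta_{g_j}(t_j)|/k_2$ for $j=1,\dots,n-1$. For each $i\neq r$, let $j(i)$ denote the unique index with $\mathrm{dst}(g_{j(i)})=i$. Let the control be defined, for each node $i\in\mathcal V$, by \[ c_i(t)=\begin{cases} k\,y_i(t) & \text{if } t<t_1,\\ k\,y_i(t_1)+k_2\,\mathrm{sign}\big(\tilde\beta_{g_{j(i)}}(t)\big) & \text{if } i\neq r \text{ and } t_{j(i)}\le t<t_{j(i)+1},\\ k\,y_i(t_1) & \text{otherwise.}\end{cases} \] Assume that at time $t_1$ the system has converged, in the sense that \[ \tilde\beta(t_1)=-k^{-1}B^\mathsf{T}Q^\ddagger\omega^{\mathrm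 u} \qquad\text{and}\qquad \omega^{\mathrm u}+k\,y(t_1)=W\omega^{\mathrm u}. \] Then $\tilde\beta(t_n)=0$.
   Context: For an edge $e$, $\mathrm{src}(e)$ and $\mathrm{dst}(e)$ denote its source and destination vertices. The matrices $S,D\in\mathbb{R}^{n\times m}$ are defined by $S_{ie}=1$ if node $i$ is the source of edge $e$ and $0$ otherwise, and $D_{ie}=1$ if node $i$ is the destination of edge $e$ and $0$ otherwise. The vector $\mathbf{1}$ is the all-ones vector. The matrix $Q=DB^\mathsf{T}$ is an irreducible rate matrix (nonnegative off-diagonal entries, zero row sums). Let $z>0$ be its left eigenvector for eigenvalue $0$ ($z^\mathsf{T}Q=0$), normalized so that $\mathbf{1}^\mathsf{T}z=1$, and set $W=\mathbf{1}z^\mathsf{T}$. Write $Q=T\begin{bmatrix}0&0\\0&\Lambda\end{bmatrix}T^{-1}$, where $T$ is invertible with first column $\mathbf{1}$, the first row of $T^{-1}$ is $z^\mathsf{T}$, and $\Lambda\in\mathbb{R}^{(n-1)\times(n-1)}$ is invertible. Define $Q^\ddagger=T\begin{bmatrix}0&0\\0&\Lambda^{-1}\end{bmatrix}T^{-1}$. An outward directed spanning tree with root $r$ is a set $\mathcal T$ of $n-1$ edges such that every vertex is reachable from $r$ by a directed path in $\mathcal T$, and each vertex other than $r$ is the destination of exactly one edge of $\mathcal T$. For $f,g\in\mathcal T$, $f\prec g$ means there is a directed walk of nonzero length in $\mathcal T$ from $\mathrm{dst}(f)$ to $\mathrm{dst}(g)$. The convention $\mathrm{sign}(0)=0$ is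 used. Here $\tilde\theta(t)\in\mathbb{R}^n$ are normalized clock phases, $\tilde\beta(t)\in\mathbb{R}^m$ are buffer occupancies relative to the desired offsets, and $\omega(t)=\omega^{\mathrm u}+c(t)$ is the frequency. *)

(* Defs.v *)
From HB Require Import structures.
From mathcomp Require Import all_boot all_order all_algebra.
From mathcomp Require Import all_classical all_reals all_analysis.
Set Implicit Arguments. Unset Strict Implicit. Unset Printing Implicit Defensive.
Import Order.TTheory GRing.Theory Num.Theory numFieldNormedType.Exports.
Local Open Scope ring_scope.

Definition edge_rel (N m : nat) (src dst : 'I_m -> 'I_N) : rel 'I_N :=
  [rel i j | [exists e, (src e == i) && (dst e == j)]].

Definition no_self_loops (N m : nat) (src dst : 'I_m -> 'I_N) : Prop :=
  forall e, src e != dst e.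

Definition strongly_connected (N m : nat) (src dst : 'I_m -> 'I_N) : Prop :=
  forall i j, connect (edge_rel src dst) i j.

Definition Smx (R : nzRingType) (N m : nat) (src : 'I_m -> 'I_N) : 'M[R]_(N, m) :=
  \matrix_(i, e) (src e == i)%:R.
Definition Dmx (R : nzRingType) (N m : nat) (dst : 'I_m -> 'I_N) : 'M[R]_(N, m) :=
  \matrix_(i, e) (dst e == i)%:R.
Definition Bmx (R : nzRingType) (N m : nat) (src dst : 'I_m -> 'I_N) : 'M[R]_(N, m) :=
  Smx R src - Dmx R dst.
Definition Qmx (R : nzRingType) (N m : nat) (src dst : 'I_m -> 'I_N) : 'M[R]_N :=
  Dmx R dst *m (Bmx R src dst)^T.

Definition is_left_null_prob (R : realFieldType) (N : nat) (Q : 'M[R]_N) (z : 'cV[R]_N) : Prop :=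
  (forall i, 0 < z i 0) /\ z^T *m Q = 0 /\ (const_mx 1 : 'rV[R]_N) *m z = 1.

Definition Wmx (R : nzRingType) (N : nat) (z : 'cV[R]_N) : 'M[R]_N :=
  const_mx 1 *m z^T.

(* Qdd is Q^ddagger, defined through a decomposition
   Q = T diag(0, L) T^-1 with T invertible, first column of T equal to 1,
   first row of T^-1 equal to z^T, L invertible, and
   Qdd = T diag(0, L^-1) T^-1. (Vertex count is n.+1 = 1 + n.) *)
Definition is_Qddag (R : fieldType) (n : nat) (Q : 'M[R]_(1 + n)) (z : 'cV[R]_(1 + n))
    (Qdd : 'M[R]_(1 + n)) : Prop :=
  exists (T : 'M[R]_(1 + n)) (L : 'M[R]_n),
    [/\ T \in unitmx, col 0 T = const_mx 1, row 0 (invmx T) = z^T, L \in unitmx &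
       (Q = T *m block_mx (0 : 'M[R]_1) 0 0 L *m invmx T /\
        Qdd = T *m block_mx (0 : 'M[R]_1) 0 0 (invmx L) *m invmx T)].

(* The relation "there is an edge of the tree from i to j"; the tree edges are
   g 0, ..., g (N-2) (i.e. the paper's g_1, ..., g_{n-1}). *)
Definition tree_rel (N K m : nat) (src dst : 'I_m -> 'I_N) (g : 'I_K -> 'I_m) : rel 'I_N :=
  [rel i j | [exists a, (src (g a) == i) && (dst (g a) == j)]].

Definition out_spanning_tree (n m : nat) (src dst : 'I_m -> 'I_n.+1)
    (g : 'I_n -> 'I_m) (r : 'I_n.+1) : Prop :=
  [/\ injective g,
      forall i, connect (tree_rel src dst g) r i &
      forall i, i != r -> #|[set a | dst (g a) == i]| = 1%N].

Definition tree_prec (N K m : nat) (src dst : 'I_m -> 'I_N) (g : 'I_K -> 'I_m)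
    (f h : 'I_m) : bool :=
  [exists v, tree_rel src dst g (dst f) v && connect (tree_rel src dst g) v (dst h)].

Definition consistent_order (n m : nat) (src dst : 'I_m -> 'I_n.+1) (g : 'I_n -> 'I_m) : Prop :=
  forall a b : 'I_n, tree_prec src dst g (g a) (g b) -> (a < b)%N.

(* j(i) (zero-based: the paper's j(i) is jidx i + 1) *)
Definition jidx (n m : nat) (dst : 'I_m -> 'I_n.+1) (g : 'I_n -> 'I_m) (i : 'I_n.+1)
    : option 'I_n := [pick a | dst (g a) == i].

(* The paper's t_{j} is tt (j-1) here, for j = 1..n. *)
Definition tt_lo (R : Type) (n : nat) (tt : 'I_n.+1 -> R) (a : 'I_n) : R :=
  tt (widen_ord (leqnSn n) a).
Definition tt_hi (R : Type) (n : nat) (tt : 'I_n.+1 -> R) (a : 'I_n) : R :=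
  tt (lift ord0 a).

Definition beta_of (R : nzRingType) (n m : nat) (src dst : 'I_m -> 'I_n.+1)
    (th : 'cV[R]_n.+1) : 'cV[R]_m := (Bmx R src dst)^T *m th.
Definition y_of (R : nzRingType) (n m : nat) (src dst : 'I_m -> 'I_n.+1)
    (th : 'cV[R]_n.+1) : 'cV[R]_n.+1 := Dmx R dst *m beta_of src dst th.

Definition control (R : realFieldType) (n m : nat) (src dst : 'I_m -> 'I_n.+1)
    (g : 'I_n -> 'I_m) (r : 'I_n.+1) (k k2 : R) (tt : 'I_n.+1 -> R)
    (theta : R -> 'cV[R]_n.+1) (t : R) (i : 'I_n.+1) : R :=
  let t1 := tt ord0 in
  if t < t1 then k * y_of src dst (theta t) i 0
  else match jidx dst g i with
       | Some a =>
           if (i != r) && (tt_lo tt a <= t) && (t < tt_hi tt a)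
           then k * y_of src dst (theta t1) i 0
                + k2 * Num.sg (beta_of src dst (theta t) (g a) 0)
           else k * y_of src dst (theta t1) i 0
       | None => k * y_of src dst (theta t1) i 0
       end.

(* Solution concept for d/dt theta = wu + c(t) (discontinuous right-hand side):
   theta is continuous on (0, +oo) and, outside a finite set of times, each
   component is differentiable with the prescribed derivative. *)
Definition solves (R : realType) (n m : nat) (src dst : 'I_m -> 'I_n.+1)
    (g : 'I_n -> 'I_m) (r : 'I_n.+1) (k k2 : R) (tt : 'I_n.+1 -> R)
    (wu : 'cV[R]_n.+1) (theta : R -> 'cV[R]_n.+1) : Prop :=
  (forall t : R, 0 < t -> forall i, {for t, continuous (fun s : R => theta s i 0)}) /\
  exists F : seq R, forall t : R, 0 < t -> t \notin F -> forall i,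
    is_derive t (1 : R) (fun s : R => theta s i 0)
      (wu i 0 + control src dst g r k k2 tt theta t i).

(* Main.v *)
Require Import Defs.
From HB Require Import structures.
From mathcomp Require Import all_boot all_order all_algebra.
From mathcomp Require Import all_classical all_reals all_analysis.
From mathcomp Require Import ring lra zify.
Import Order.TTheory GRing.Theory Num.Theory numFieldNormedType.Exports.
Local Open Scope ring_scope.

Section Helpers.
Local Open Scope classical_set_scope.
Local Open Scope ring_scope.
Set Implicit Arguments. Unset Strict Implicit.

Lemma core_nincr (R : realType) (f : R -> R) (F : seq R) (u v : R) :
  u <= v -> (forall t, u <= t -> t <= v -> {for t, continuous f}) ->
  (forall t, u < t -> t < v -> t \notin F -> exists2 d, is_derive t 1 f d & d <= 0) ->
  f v <= f u.
Proof.
elim: F u v => [|x F IH] u v uv fc fd.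
  move: uv; rewrite le_eqVlt => /orP[/eqP -> //|uv].
  have H1 : forall t, t \in `]u, v[%R -> is_derive t 1 f ('D_1 f t).
    move=> t; rewrite in_itv /= => /andP[t1 t2].
    have [d Hd _] := fd t t1 t2 (negbT (in_nil _)).
    by rewrite derive_val.
  have H2 : {within `[u, v], continuous f}.
    apply: continuous_in_subspaceT => t; rewrite inE /= in_itv /= => /andP[t1 t2].
    exact: fc.
  have [c cin Hc] := @MVT R f (fun t => 'D_1 f t) u v uv H1 H2.
  move: cin; rewrite in_itv /= => /andP[c1 c2].
  have [d Hd d0] := fd c c1 c2 (negbT (in_nil _)).
  rewrite -subr_le0 Hc derive_val.
  by apply: mulr_le0_ge0 => //; rewrite subr_ge0 ltW.
have [/andP[ux xv]|nx] := boolP ((u < x) && (x < v)).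
  apply: (@le_trans _ _ (f x)).
    apply: IH; first exact: ltW.
    - by move=> t t1 t2; apply: fc => //; apply: le_trans (ltW ux) t1.
    - move=> t t1 t2 tF; apply: fd => //; first exact: lt_trans ux t1.
      by rewrite in_cons negb_or tF andbT gt_eqF.
  apply: IH; first exact: ltW.
  - by move=> t t1 t2; apply: fc => //; apply: le_trans t2 (ltW xv).
  - move=> t t1 t2 tF; apply: fd => //; first exact: lt_trans t2 xv.
    by rewrite in_cons negb_or tF andbT lt_eqF.
apply: IH => // t t1 t2 tF; apply: fd => //.
rewrite in_cons negb_or tF andbT; apply/eqP => tx; move: nx; rewrite -tx t1 t2.
by [].
Qed.

Lemma const_fin (R : realType) (f : R -> R) (F : seq R) (u v c : R) :
  u <= v -> (forall t, u <= t -> t <= v -> {for t, continuous f}) ->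
  (forall t, u < t -> t < v -> t \notin F -> is_derive t 1 f c) ->
  f v = f u + c * (v - u).
Proof.
move=> uv fc fd.
have cl : forall t, {for t, continuous (fun s : R => c * s)}.
  by move=> t; apply: mulrl_continuous.
have dl : forall t, is_derive t (1:R) (fun s : R => c * s) c.
  move=> t; have := @is_deriveZ R R^o R^o id c t 1 1 (is_derive_id t 1).
  move=> H; apply: is_derive_eq H _; rewrite /GRing.scale /=; exact: mulr1.
apply/eqP; rewrite eq_le; apply/andP; split.
- rewrite -subr_ge0.
  have -> : f u + c * (v - u) - f v = (f u - c * u) - (f v - c * v) by ring.
  rewrite subr_ge0; apply: (@core_nincr R (fun s => f s - c * s) F) => //.
    by move=> t t1 t2; apply: (@continuousB R R^o) => //; apply: fc.
  move=> t t1 t2 tF; exists (c - c) => //; last by rewrite subrr.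
  exact: (is_deriveB (fd t t1 t2 tF) (dl t)).
- rewrite -subr_ge0.
  have -> : f v - (f u + c * (v - u)) = (c * u - f u) - (c * v - f v) by ring.
  rewrite subr_ge0; apply: (@core_nincr R (fun s => c * s - f s) F) => //.
    by move=> t t1 t2; apply: (@continuousB R R^o) => //; apply: fc.
  move=> t t1 t2 tF; exists (c - c) => //; last by rewrite subrr.
  exact: (is_deriveB (dl t) (fd t t1 t2 tF)).
Qed.

Lemma slide (R : realType) (b : R -> R) (F : seq R) (p q k2 : R) :
  0 < k2 -> p <= q -> (forall t, p <= t -> t <= q -> {for t, continuous b}) ->
  (forall t, p < t -> t < q -> t \notin F -> is_derive t 1 b (- k2 * Num.sg (b t))) ->
  `|b p| / k2 < q - p -> b q = 0.
Proof.
move=> k2p pq.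
wlog: b / 0 <= b p.
  move=> W bc bd hb; case: (leP 0 (b p)) => h; first exact: W.
  apply/eqP; rewrite -oppr_eq0; apply/eqP.
  apply: (W (fun s => - b s)).
  - by rewrite oppr_ge0 ltW.
  - by move=> t t1 t2; apply: continuousN; apply: bc.
  - move=> t t1 t2 tF; have := is_deriveN (bd t t1 t2 tF).
    move=> H; apply: is_derive_eq H _; rewrite sgrN; ring.
  - by rewrite normrN.
move=> bp0 bc bd hb.
have sq : forall u v, p <= u -> u <= v -> v <= q -> b v * b v <= b u * b u.
  move=> u v pu uv vq.
  apply: (@core_nincr R (b \* b) F) => //.
    move=> t t1 t2; apply: (@continuousM R R^o); apply: bc => //.
      exact: le_trans pu t1.
    exact: le_trans t2 vq.
    exact: le_trans pu t1.
    exact: le_trans t2 vq.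
  move=> t t1 t2 tF.
  have H := bd t (le_lt_trans pu t1) (lt_le_trans t2 vq) tF.
  exists (b t *: (- k2 * Num.sg (b t)) + b t *: (- k2 * Num.sg (b t))).
    exact: (is_deriveM H H).
  rewrite /GRing.scale /=.
  case: (ltrgtP (b t) 0) => h.
  - rewrite ltr0_sg //; nra.
  - rewrite gtr0_sg //; nra.
  - by rewrite h sgr0; lra.
apply/eqP/negPn/negP => bq0.
have nz : forall t, p <= t -> t <= q -> b t != 0.
  move=> t t1 t2; apply/negP => /eqP bt0.
  have := sq t q t1 t2 (lexx q); rewrite bt0 mulr0 => H.
  move: bq0; case: (ltrgtP (b q) 0) => h _ //; nra.
have bpp : 0 < b p by rewrite lt_def nz // lexx.
have pos : forall t, p <= t -> t <= q -> 0 < b t.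
  move=> t t1 t2; rewrite ltNge; apply/negP => bt.
  have [c cin bc0] : exists2 c, c \in `[p, t] & b c = 0.
    apply: IVT => //.
      apply: continuous_in_subspaceT => s; rewrite inE /= in_itv /= => /andP[s1 s2].
      by apply: bc => //; apply: le_trans s2 t2.
    by rewrite ge_min le_max bt (ltW bpp) orbT.
  move: cin; rewrite in_itv /= => /andP[c1 c2].
  by move: (nz c c1 (le_trans c2 t2)); rewrite bc0 eqxx.
have E : b q = b p + - k2 * (q - p).
  apply: (@const_fin R b F p q (- k2) pq bc) => t t1 t2 tF.
  apply: is_derive_eq (bd t t1 t2 tF) _.
  by rewrite (gtr0_sg (pos t (ltW t1) (ltW t2))) mulr1.
have H1 : b p < (q - p) * k2 by rewrite -ltr_pdivrMr // -(gtr0_norm bpp).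
have H2 := pos q pq (lexx q).
rewrite E in H2; nra.
Qed.

Lemma sum_delta (R : nzRingType) (N : nat) (a : 'I_N) (x : 'I_N -> R) :
  \sum_i (a == i)%:R * x i = x a.
Proof.
rewrite (bigD1 a) //= eqxx mul1r big1 ?addr0 // => i /negbTE.
by rewrite eq_sym => ->; rewrite mul0r.
Qed.

Lemma betaE (R : nzRingType) (n m : nat) (src dst : 'I_m -> 'I_n.+1)
  (th : 'cV[R]_n.+1) e :
  beta_of src dst th e 0 = th (src e) 0 - th (dst e) 0.
Proof.
rewrite /beta_of mxE.
under eq_bigr do rewrite !mxE mulrBl.
by rewrite sumrB !sum_delta.
Qed.

Definition extc (R : realFieldType) (n m : nat) (src dst : 'I_m -> 'I_n.+1)
    (g : 'I_n -> 'I_m) (r : 'I_n.+1) (k2 : R) (tt : 'I_n.+1 -> R)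
    (theta : R -> 'cV[R]_n.+1) (t : R) (i : 'I_n.+1) : R :=
  match jidx dst g i with
  | Some a =>
      if (i != r) && (tt_lo tt a <= t) && (t < tt_hi tt a)
      then k2 * Num.sg (beta_of src dst (theta t) (g a) 0)
      else 0
  | None => 0
  end.

Lemma control_split (R : realFieldType) (n m : nat) (src dst : 'I_m -> 'I_n.+1)
    (g : 'I_n -> 'I_m) (r : 'I_n.+1) (k k2 : R) (tt : 'I_n.+1 -> R)
    (theta : R -> 'cV[R]_n.+1) (t : R) (i : 'I_n.+1) :
  ~~ (t < tt ord0) ->
  control src dst g r k k2 tt theta t i
  = k * y_of src dst (theta (tt ord0)) i 0 + extc src dst g r k2 tt theta t i.
Proof.
move=> /negbTE h; rewrite /control /extc h.
case: (jidx dst g i) => [a|]; last by rewrite addr0.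
by case: ifP => _; rewrite ?addr0.
Qed.

Lemma tt_mono (R : realFieldType) (n : nat) (tt : 'I_n.+1 -> R) :
  (forall a : 'I_n, tt_lo tt a < tt_hi tt a) ->
  forall i j : 'I_n.+1, (i <= j)%N -> tt i <= tt j.
Proof.
move=> Htt.
have step : forall x : nat, (x < n)%N -> tt (inord x) < tt (inord x.+1).
  move=> x xn; have := Htt (Ordinal xn); rewrite /tt_lo /tt_hi.
  have -> : widen_ord (leqnSn n) (Ordinal xn) = inord x.
    by apply: val_inj; rewrite /= inordK // ltnS ltnW.
  have -> : lift ord0 (Ordinal xn) = inord x.+1.
    by apply: val_inj; rewrite /= inordK.
  by [].
have gen : forall d x, (x + d <= n)%N -> tt (inord x) <= tt (inord (x + d)).
  elim=> [|d IH] x h; first by rewrite addn0.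
  apply: le_trans (IH x _) _; first by apply: leq_trans h; rewrite leq_add2l.
  by rewrite addnS; apply/ltW/step; rewrite -ltnS -addnS.
move=> i j ij.
rewrite -(inord_val i) -(inord_val j) -(subnKC ij); apply: gen.
by rewrite subnKC // -ltnS.
Qed.

End Helpers.

Theorem theorem2 (R : realType) (n m : nat) (src dst : 'I_m -> 'I_n.+1)
  (z : 'cV[R]_n.+1) (Qdd : 'M[R]_n.+1) (wu : 'cV[R]_n.+1)
  (g : 'I_n -> 'I_m) (r : 'I_n.+1) (k k2 : R) (tt : 'I_n.+1 -> R)
  (theta : R -> 'cV[R]_n.+1) :
  no_self_loops src dst ->
  strongly_connected src dst ->
  is_left_null_prob (Qmx R src dst) z ->
  is_Qddag (Qmx R src dst) z Qdd ->
  out_spanning_tree src dst g r ->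
  consistent_order src dst g ->
  0 < k -> 0 < k2 ->
  0 < tt ord0 ->
  (forall a : 'I_n, tt_lo tt a < tt_hi tt a) ->
  solves src dst g r k k2 tt wu theta ->
  (forall a : 'I_n,
     tt_hi tt a - tt_lo tt a
       > `|beta_of src dst (theta (tt_lo tt a)) (g a) 0| / k2) ->
  beta_of src dst (theta (tt ord0))
    = - k^-1 *: ((Bmx R src dst)^T *m Qdd *m wu) ->
  wu + k *: y_of src dst (theta (tt ord0)) = Wmx z *m wu ->
  beta_of src dst (theta (tt ord_max)) = 0.
Proof.
move=> _ _ _ _ [ginj Hconn Hcard] Hcons k0 k20 t10 Htt [Hcont [F HF]] Hbnd _ Hy.
have Hmono := tt_mono Htt.
set wbar := (Wmx z *m wu) r 0.
have Hw : forall i, wu i 0 + k * y_of src dst (theta (tt ord0)) i 0 = wbar.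
  move=> i; have := congr1 (fun M : 'cV[R]_n.+1 => M i 0) Hy; rewrite !mxE => ->.
  rewrite /wbar /Wmx !mxE; apply: eq_bigr => l _; rewrite !mxE; congr (_ * _).
  by apply: eq_bigr => x _; rewrite !mxE.
have Hth : forall t i, tt ord0 <= t -> t \notin F ->
    is_derive t (1:R) (fun s => theta s i 0) (wbar + extc src dst g r k2 tt theta t i).
  move=> t i t1 tF.
  have tp : 0 < t by apply: lt_le_trans t10 t1.
  have := HF t tp tF i; rewrite control_split; last by rewrite -leNgt.
  by rewrite addrA Hw.
have betaF : forall e, (fun s => beta_of src dst (theta s) e 0)
    = (fun s => theta s (src e) 0) - (fun s => theta s (dst e) 0).
  by move=> e; apply: funext => s; rewrite betaE.
have Hbd : forall t e, tt ord0 <= t -> t \notin F ->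
    is_derive t (1:R) (fun s => beta_of src dst (theta s) e 0)
      (extc src dst g r k2 tt theta t (src e) - extc src dst g r k2 tt theta t (dst e)).
  move=> t e t1 tF; rewrite betaF.
  apply: is_derive_eq (is_deriveB (Hth t (src e) t1 tF) (Hth t (dst e) t1 tF)) _.
  ring.
have Hbc : forall t e, 0 < t -> {for t, continuous (fun s => beta_of src dst (theta s) e 0)}.
  move=> t e tp; rewrite betaF; apply: (@continuousB R R^o); exact: Hcont.
have T1 : forall a, dst (g a) != r.
  move=> a; apply/eqP => Ha.
  have S : (n = \sum_(i : 'I_n.+1) #|[set a0 | dst (g a0) == i]|)%N.
    rewrite -{1}(card_ord n) -sum1_card.
    rewrite (partition_big (fun a0 => dst (g a0)) predT) //=.
    by apply: eq_bigr => i _; rewrite sum1dep_card.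
  move: S; rewrite (bigD1 r) //=.
  rewrite (eq_bigr (fun _ => 1%N)); last by move=> i /Hcard.
  rewrite sum1_card cardC1 card_ord /= => S.
  have : #|[set a0 | dst (g a0) == r]| == 0%N.
    by move: S; rewrite -{1}[n]add0n => /eqP; rewrite eqn_add2r eq_sym.
  rewrite cards_eq0 => /eqP E.
  have : a \in [set a0 | dst (g a0) == r] by rewrite inE Ha.
  by rewrite E inE.
have T2 : forall a a', dst (g a') = dst (g a) -> a' = a.
  move=> a a' Ha; have /eqP/cards1P [x Ex] := Hcard _ (T1 a).
  have h1 : a \in [set a0 | dst (g a0) == dst (g a)] by rewrite inE.
  have h2 : a' \in [set a0 | dst (g a0) == dst (g a)] by rewrite inE Ha.
  by move: h1 h2; rewrite Ex !inE => /eqP -> /eqP ->.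
have T3 : forall a b, dst (g b) = src (g a) -> (b < a)%N.
  move=> a b Hb; apply: Hcons; apply/existsP; exists (dst (g a)).
  rewrite connect0 andbT; apply/existsP; exists a.
  by rewrite Hb !eqxx.
have E1 : forall a t, extc src dst g r k2 tt theta t (dst (g a))
    = if (tt_lo tt a <= t) && (t < tt_hi tt a)
      then k2 * Num.sg (beta_of src dst (theta t) (g a) 0) else 0.
  move=> a t; rewrite /extc /jidx; case: pickP => [a' /eqP Ha'|H].
    by rewrite (T2 _ _ Ha') T1.
  by have := H a; rewrite eqxx.
have E2 : forall a t, tt_lo tt a <= t -> extc src dst g r k2 tt theta t (src (g a)) = 0.
  move=> a t ht; rewrite /extc /jidx; case: pickP => [b /eqP Hb|_] //.
  case: ifP => // /andP[/andP[_ _] th].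
  have bl := T3 a b Hb.
  have : tt_hi tt b <= tt_lo tt a by apply: Hmono; rewrite /= /bump /=.
  move=> h; have := lt_le_trans th (le_trans h ht); by rewrite ltxx.
have Hedge : forall a, beta_of src dst (theta (tt ord_max)) (g a) 0 = 0.
  move=> a.
  have p1 : tt ord0 <= tt_lo tt a by apply: Hmono.
  have pq := Htt a.
  have qm : tt_hi tt a <= tt ord_max by apply: Hmono; rewrite /= /bump /=; exact: ltn_ord a.
  have Hq0 : beta_of src dst (theta (tt_hi tt a)) (g a) 0 = 0.
    apply: (@slide R (fun s => beta_of src dst (theta s) (g a) 0) F _ _ k2 k20 (ltW pq)).
    - move=> t t1 t2; apply: Hbc; exact: lt_le_trans t10 (le_trans p1 t1).
    - move=> t t1 t2 tF; apply: is_derive_eq (Hbd t (g a) (le_trans p1 (ltW t1)) tF) _.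
      rewrite E2 ?(ltW t1) // E1 (ltW t1) t2 /=; ring.
    - exact: Hbnd a.
  have -> : beta_of src dst (theta (tt ord_max)) (g a) 0
      = beta_of src dst (theta (tt_hi tt a)) (g a) 0 + 0 * (tt ord_max - tt_hi tt a);
    last by rewrite mul0r addr0.
  apply: (@const_fin R (fun s => beta_of src dst (theta s) (g a) 0) F _ _ 0 qm).
  - move=> t t1 t2; apply: Hbc.
    exact: lt_le_trans t10 (le_trans p1 (le_trans (ltW pq) t1)).
  - move=> t t1 t2 tF.
    have lt : tt_lo tt a <= t by apply: le_trans (ltW pq) (ltW t1).
    apply: is_derive_eq (Hbd t (g a) (le_trans p1 lt) tF) _.
    by rewrite E2 // E1 lt ltNge (ltW t1) /= subrr.
have Hnode : forall a, theta (tt ord_max) (src (g a)) 0 = theta (tt ord_max) (dst (g a)) 0.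
  by move=> a; apply/eqP; rewrite -subr_eq0 -betaE Hedge.
have Hall : forall i, theta (tt ord_max) i 0 = theta (tt ord_max) r 0.
  have gen : forall pth y, path (tree_rel src dst g) y pth ->
      theta (tt ord_max) (last y pth) 0 = theta (tt ord_max) y 0.
    elim=> //= x pth IH y /andP[Hyx Hp].
    rewrite (IH x Hp).
    move: Hyx => /existsP [a /andP[/eqP Hs /eqP Hd]].
    by rewrite -Hd -Hs Hnode.
  move=> i; have /connectP [pth Hp ->] := Hconn i.
  exact: gen.
apply/matrixP => e j; rewrite ord1 betaE !Hall subrr.
by rewrite mxE.
Qed.
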